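(* Let $R\in\operatorname{Ob}(\hat{\mathcal C})$, $G=\mathrm{SL}_2(R)$, $\bar\rho:G\to\mathrm{GL}_2(k)$ induced by reduction, and $S\in\operatorname{Ob}(\hat{\mathcal C})$. For $a\in\mu_R$ let $a_S\in\mu_S$ be the unique element of $\mu_S$ with the same image in $k$ as $a$. Then every deformation of $\bar\rho$ to $S$ has a representative $\rho$ with $\rho\big(\mathrm{diag}(a,a^{-1})\big)=\mathrm{diag}(a_S,a_S^{-1})$ for all $a\in\mu_R$.
   Context: Let $k$ be a finite field. $\hat{\mathcal C}$ is the category of complete noetherian local commutative rings with residue field $k$, with local homomorphisms inducing the identity on $k$; $\mathfrak m_S$ is the maximal ideal of $S$. For $S\in\hat{\mathcal C}$, $\mu_S=\{x\in S: x^{\#k-1}=1\}$ (the Teichmüller lifts of $k^\times$), which maps bijectively onto $k^\times$. For a profinite group $G$ and continuous $\bar\rho:G\to\mathrm{GL}_n(k)$, a lift to $S$ is a continuous $\rho:G\to\mathrm{GL}_n(S)$ reducing to $\bar\rho$; lifts are strictly equivalent if conjugate by an element of $I+M_n(\mathfrak m_S)$; a deformation is a strict equivalence class. *)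

(* Defs.v *)
From HB Require Import structures.
From mathcomp Require Import all_boot all_order all_algebra all_field.
Set Implicit Arguments. Unset Strict Implicit. Unset Printing Implicit Defensive.
Import GRing.Theory.
Local Open Scope ring_scope.

Definition is_ideal (R : comUnitRingType) (I : R -> Prop) :=
  I 0 /\ (forall x y, I x -> I y -> I (x + y)) /\ (forall r x, I x -> I (r * x)).

Definition fin_gen (R : comUnitRingType) (I : R -> Prop) :=
  exists n (g : 'I_n -> R), forall x,
    I x <-> exists c : 'I_n -> R, x = \sum_(i < n) c i * g i.

Definition noetherian (R : comUnitRingType) :=
  forall I : R -> Prop, is_ideal I -> fin_gen I.

Fixpoint ideal_pow (R : comUnitRingType) (I : R -> Prop) (n : nat) : R -> Prop :=
  match n with
  | 0 => fun _ => True
  | n'.+1 => fun x => exists s : seq (R * R),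
      (forall p, p \in s -> I p.1 /\ ideal_pow I n' p.2) /\
      x = \sum_(p <- s) p.1 * p.2
  end.

Definition maxid (R : comUnitRingType) (k : fieldType) (pi : {rmorphism R -> k})
  (x : R) : Prop := pi x = 0.

(* pi : R -> k surjective, and R local with maximal ideal ker pi. *)
Definition local_residue (R : comUnitRingType) (k : fieldType)
  (pi : {rmorphism R -> k}) :=
  (forall y, exists x, pi x = y) /\ (forall x, pi x != 0 -> x \is a GRing.unit).

Definition adic_complete (R : comUnitRingType) (I : R -> Prop) :=
  (forall x, (forall n, ideal_pow I n x) -> x = 0) /\
  (forall u : nat -> R,
     (forall n, exists N, forall i j, (N <= i)%N -> (N <= j)%N ->
          ideal_pow I n (u i - u j)) ->
     exists l, forall n, exists N, forall i, (N <= i)%N -> ideal_pow I n (u i - l)).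

Definition in_hatC (k : finFieldType) (R : comUnitRingType) (pi : {rmorphism R -> k}) :=
  local_residue pi /\ noetherian R /\ adic_complete (maxid pi).

Definition SL2 (R : comUnitRingType) (A : 'M[R]_2) : Prop := \det A = 1.

Definition congr_id (R : comUnitRingType) (I : R -> Prop) (A : 'M[R]_2) : Prop :=
  forall i j, I (A i j - (1%:M : 'M[R]_2) i j).

(* Continuity is stated at the identity (enough for homomorphisms) w.r.t. the
   bases of neighbourhoods given by the principal congruence subgroups. *)
Definition is_lift (k : finFieldType) (R S : comUnitRingType)
  (piR : {rmorphism R -> k}) (piS : {rmorphism S -> k})
  (rho : 'M[R]_2 -> 'M[S]_2) :=
  (forall A B, SL2 A -> SL2 B -> rho (A *m B) = rho A *m rho B) /\
  (forall A, SL2 A -> rho A \in unitmx) /\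
  (forall A, SL2 A -> map_mx piS (rho A) = map_mx piR A) /\
  (forall n, exists N, forall A, SL2 A ->
      congr_id (ideal_pow (maxid piR) N) A ->
      congr_id (ideal_pow (maxid piS) n) (rho A)).

Definition strictly_equiv (k : finFieldType) (R S : comUnitRingType)
  (piS : {rmorphism S -> k}) (rho rho' : 'M[R]_2 -> 'M[S]_2) :=
  exists C : 'M[S]_2, congr_id (maxid piS) C /\
    forall A, SL2 A -> rho' A = C *m rho A *m invmx C.

Definition mu (T : comUnitRingType) (q : nat) (x : T) : Prop := x ^+ q.-1 = 1.

Definition diag2 (T : comUnitRingType) (a b : T) : 'M[T]_2 :=
  \matrix_(i < 2, j < 2)
     (if i == j then (if (i : nat) == 0%N then a else b) else 0).

(* Main.v *)
Require Import Defs.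
From HB Require Import structures.
From mathcomp Require Import all_boot all_order all_algebra all_field.
From Stdlib Require Import Classical.
Import GRing.Theory.
Local Open Scope ring_scope.
Set Implicit Arguments. Unset Strict Implicit.


Lemma cardk0 (k : finFieldType) : (#|k|%:R : k) = 0.
Proof.
have [p pr pc] := finPcharP k.
have := card_pprimeChar pc => /= E.
apply/eqP; rewrite -(dvdn_pcharf pc).
have h1 := finNzRing_gt1 k.
move: E h1; set m := logn _ _ => E h1.
rewrite E. case: m E h1 => [|m] E h1. by rewrite E in h1.
by rewrite expnS dvdn_mulr.
Qed.

Lemma nk0 (k : finFieldType) : ((#|k|.-1)%:R : k) != 0.
Proof.
have h1 := finNzRing_gt1 k.
have : (#|k| = (#|k|.-1).+1)%N by rewrite prednK // ltnW.
move=> E; have := cardk0 k; rewrite E mulrS => /eqP.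
rewrite addrC addr_eq0 => /eqP ->. by rewrite oppr_eq0 oner_eq0.
Qed.

Lemma geo_sum (F : fieldType) (x : F) n : x ^+ n = 1 ->
  \sum_(i < n) x ^+ i = if x == 1 then n%:R else 0.
Proof.
move=> h; case: eqP => [->|/eqP ne].
  by under eq_bigr do rewrite expr1n; rewrite sumr_const card_ord.
have : (x - 1) * \sum_(i < n) x ^+ i = 0 by rewrite -subrX1 h subrr.
by move/eqP; rewrite mulf_eq0 subr_eq0 (negbTE ne) /= => /eqP.
Qed.

Lemma mu_unit (T : unitRingType) (x : T) n : (0 < n)%N -> x ^+ n = 1 -> x \is a GRing.unit.
Proof. by move=> n0 h; rewrite -(unitrX_pos x n0) h unitr1. Qed.

Lemma uniq_mu (k : fieldType) (S : comUnitRingType) (piS : {rmorphism S -> k}) n (x y : S) :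
  local_residue piS -> (n%:R : k) != 0 -> x ^+ n = 1 -> y ^+ n = 1 -> piS x = piS y -> x = y.
Proof.
move=> [_ loc] nk hx hy hxy.
have n0 : (0 < n)%N by case: n nk {hx hy} => //; rewrite eqxx.
have ux : x \is a GRing.unit := mu_unit n0 hx.
set u := y / x.
have hu : u ^+ n = 1 by rewrite /u exprMn exprVn hx hy invr1 mulr1.
have pu : piS u = 1.
  rewrite /u rmorphM rmorphV // hxy divrr //.
  rewrite -hxy unitfE; apply/negP => /eqP h.
  have := rmorph1 piS; rewrite -(mulrV ux) rmorphM h mul0r => /eqP; by rewrite eq_sym oner_eq0.
have us : \sum_(i < n) u ^+ i \is a GRing.unit.
  apply: loc; rewrite rmorph_sum.
  under eq_bigr do rewrite rmorphXn pu expr1n.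
  by rewrite sumr_const card_ord.
have : (u - 1) * \sum_(i < n) u ^+ i = 0 by rewrite -subrX1 hu subrr.
move=> h0.
have : u - 1 = 0 by rewrite -(mulrK us (u - 1)) h0 mul0r.
move/eqP; rewrite subr_eq0 /u => /eqP h.
by rewrite -(divrK ux y) h mul1r.
Qed.



Lemma ord2P (i : 'I_2) : i = 0 \/ i = 1.
Proof. case: i => [[|[|//]] hi]; [left|right]; exact/val_inj. Qed.

Lemma mx2P (T : Type) (A B : 'M[T]_2) :
  A 0 0 = B 0 0 -> A 0 1 = B 0 1 -> A 1 0 = B 1 0 -> A 1 1 = B 1 1 -> A = B.
Proof.
move=> h1 h2 h3 h4; apply/matrixP => i j.
by case: (ord2P i) => ->; case: (ord2P j) => ->.
Qed.

Lemma sum2 (V : nmodType) (F : 'I_2 -> V) : \sum_(i < 2) F i = F 0 + F 1.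
Proof. by rewrite big_ord_recl big_ord1; congr (F _ + F _); apply/val_inj. Qed.

Lemma diag2E (T : comUnitRingType) (a b : T) :
  [/\ diag2 a b 0 0 = a, diag2 a b 0 1 = 0, diag2 a b 1 0 = 0 & diag2 a b 1 1 = b].
Proof. by rewrite !mxE. Qed.

Lemma mulmx2E (T : comUnitRingType) (A B : 'M[T]_2) i j :
  (A *m B) i j = A i 0 * B 0 j + A i 1 * B 1 j.
Proof. by rewrite mxE sum2. Qed.

Lemma diag2_mul (T : comUnitRingType) (a b c d : T) :
  diag2 a b *m diag2 c d = diag2 (a * c) (b * d).
Proof.
by apply: mx2P; rewrite !mulmx2E !mxE /= ?mul0r ?mulr0 ?addr0 ?add0r.
Qed.

Lemma diag2_1 (T : comUnitRingType) : diag2 (1 : T) 1 = 1%:M.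
Proof. by apply: mx2P; rewrite !mxE. Qed.

Lemma diag2_add (T : comUnitRingType) (a b c d : T) :
  diag2 a b + diag2 c d = diag2 (a + c) (b + d).
Proof. by apply: mx2P; rewrite !mxE ?addr0. Qed.

Lemma diag2_scale (T : comUnitRingType) (s a b : T) :
  s *: diag2 a b = diag2 (s * a) (s * b).
Proof. by apply: mx2P; rewrite !mxE ?mulr0. Qed.

Lemma diag2_exp (T : comUnitRingType) (a b : T) j :
  (diag2 a b : 'M[T]_2) ^+ j = diag2 (a ^+ j) (b ^+ j).
Proof.
elim: j => [|j ih]; first by rewrite !expr0 diag2_1.
by rewrite exprS ih -mulmxE diag2_mul -!exprS.
Qed.

Lemma diag2_sum (T : comUnitRingType) n (a b : 'I_n -> T) :
  \sum_(i < n) diag2 (a i) (b i) = diag2 (\sum_(i < n) a i) (\sum_(i < n) b i).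
Proof.
elim: n a b => [|n ih] a b; first by rewrite !big_ord0; apply: mx2P; rewrite !mxE.
by rewrite !big_ord_recr /= ih diag2_add.
Qed.

Lemma map_diag2 (T U : comUnitRingType) (f : {rmorphism T -> U}) (a b : T) :
  map_mx f (diag2 a b) = diag2 (f a) (f b).
Proof. by apply: mx2P; rewrite !mxE ?rmorph0. Qed.

Lemma det_diag2 (T : comUnitRingType) (a b : T) : \det (diag2 a b) = a * b.
Proof.
rewrite (expand_det_row _ 0) big_ord_recl big_ord1 /cofactor !mxE /= mul0r addr0.
by rewrite expr0 mul1r det_mx11 !mxE.
Qed.

Lemma map_mxX (T U : comUnitRingType) (f : {rmorphism T -> U}) (A : 'M[T]_2) j :
  map_mx f (A ^+ j) = (map_mx f A) ^+ j.
Proof.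
elim: j => [|j ih]; first by rewrite !expr0 map_mx1.
by rewrite !exprS -!mulmxE map_mxM ih.
Qed.



Lemma ip0 (R : comUnitRingType) (I : R -> Prop) n : ideal_pow I n 0.
Proof. case: n => //= n; exists [::]; by rewrite big_nil. Qed.

Lemma ipD (R : comUnitRingType) (I : R -> Prop) n x y :
  ideal_pow I n x -> ideal_pow I n y -> ideal_pow I n (x + y).
Proof.
case: n => //= n [s [hs ->]] [t [ht ->]]; exists (s ++ t); split; last by rewrite big_cat.
by move=> p; rewrite mem_cat => /orP [/hs|/ht].
Qed.

Lemma ipM (R : comUnitRingType) (I : R -> Prop) n r x :
  (forall r x, I x -> I (r * x)) -> ideal_pow I n x -> ideal_pow I n (r * x).
Proof.
move=> hI; case: n => //= n [s [hs ->]].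
exists [seq (r * p.1, p.2) | p <- s]; split.
  move=> p /mapP [q /hs [h1 h2] ->] /=; split => //; exact: hI.
by rewrite big_map mulr_sumr; apply: eq_bigr => p _; rewrite mulrA.
Qed.

Lemma ipS (R : comUnitRingType) (I : R -> Prop) n m (F : 'I_m -> R) :
  (forall i, ideal_pow I n (F i)) -> ideal_pow I n (\sum_(i < m) F i).
Proof.
move=> h; apply: (big_ind (ideal_pow I n)); [exact: ip0 | exact: ipD | by move=> i _].
Qed.

Lemma maxid_mul (k : fieldType) (S : comUnitRingType) (piS : {rmorphism S -> k}) r x :
  maxid piS x -> maxid piS (r * x).
Proof. by rewrite /maxid rmorphM => ->; rewrite mulr0. Qed.

Lemma congr_conj (k : fieldType) (S : comUnitRingType) (piS : {rmorphism S -> k}) n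
   (C D X : 'M[S]_2) :
  C *m D = 1%:M -> congr_id (ideal_pow (maxid piS) n) X ->
  congr_id (ideal_pow (maxid piS) n) (C *m X *m D).
Proof.
move=> hCD hX i j.
set Y := X - 1%:M.
have -> : C *m X *m D = C *m Y *m D + 1%:M by rewrite /Y mulmxBr mulmxBl mulmx1 hCD subrK.
rewrite [X in X - _]mxE addrK.
rewrite mxE; apply: ipS => l; rewrite mulrC; apply: ipM; first exact: maxid_mul.
rewrite mxE; apply: ipS => m; apply: ipM; first exact: maxid_mul.
by rewrite /Y !mxE; have := hX m l; rewrite !mxE.
Qed.

Lemma unit_of_map1 (k : fieldType) (S : comUnitRingType) (piS : {rmorphism S -> k})
   (P : 'M[S]_2) : local_residue piS -> map_mx piS P = 1%:M -> P \in unitmx.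
Proof.
move=> [_ loc] h; rewrite unitmxE; apply: loc.
by rewrite -det_map_mx h det1 oner_eq0.
Qed.



Definition Eop (S : comUnitRingType) n (M : 'M[S]_2) (s : S) : 'M[S]_2 :=
  \sum_(j < n) (s^-1 *: M) ^+ j.

Lemma Eop_eig (S : comUnitRingType) n (M : 'M[S]_2) (s : S) :
  s \is a GRing.unit -> s ^+ n = 1 -> M ^+ n = 1 -> M *m Eop n M s = s *: Eop n M s.
Proof.
move=> us hs hM.
set N := s^-1 *: M.
have hN : N ^+ n = 1 by rewrite /N exprZn hM exprVn hs invr1 scale1r.
have : (N - 1) * Eop n M s = 0 by rewrite /Eop -subrX1 hN subrr.
rewrite mulrBl mul1r => /eqP; rewrite subr_eq0 => /eqP h.
rewrite -{2}h /N -scalerAl scalerA divrr // scale1r.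
by rewrite mulmxE.
Qed.

Lemma map_Eop (k : fieldType) (S : comUnitRingType) (piS : {rmorphism S -> k}) n
   (M : 'M[S]_2) (s : S) (x y : k) :
  map_mx piS M = diag2 x y ->
  map_mx piS (Eop n M s) =
    diag2 (\sum_(j < n) (piS s^-1 * x) ^+ j) (\sum_(j < n) (piS s^-1 * y) ^+ j).
Proof.
move=> hM; rewrite /Eop map_mx_sum -diag2_sum; apply: eq_bigr => j _.
by rewrite map_mxX map_mxZ hM diag2_scale diag2_exp.
Qed.

Lemma eigen (k : fieldType) (S : comUnitRingType) (piS : {rmorphism S -> k}) n
   (M : 'M[S]_2) (b : S) :
  local_residue piS -> (n%:R : k) != 0 -> b ^+ n = 1 -> M ^+ n = 1 ->
  map_mx piS M = diag2 (piS b) (piS b)^-1 ->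
  exists P : 'M[S]_2, map_mx piS P = 1%:M /\ M *m P = P *m diag2 b b^-1.
Proof.
move=> loc nk hb hM hmap.
have n0 : (0 < n)%N by case: n nk {hb hM} => //; rewrite eqxx.
have ub : b \is a GRing.unit := mu_unit n0 hb.
have ubi : b^-1 \is a GRing.unit by rewrite unitrV.
have hbi : b^-1 ^+ n = 1 by rewrite exprVn hb invr1.
have pb0 : piS b != 0.
  apply/negP => /eqP h; have := rmorph1 piS; rewrite -(mulrV ub) rmorphM h mul0r.
  by move/eqP; rewrite eq_sym oner_eq0.
have uv : (n%:R : S) \is a GRing.unit by apply: loc.2; rewrite rmorph_nat.
set D10 : 'M[S]_2 := diag2 1 0. set D01 : 'M[S]_2 := diag2 0 1.
exists ((n%:R)^-1 *: (Eop n M b *m D10 + Eop n M b^-1 *m D01)); split.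
  rewrite map_mxZ map_mxD !map_mxM !(map_Eop _ _ hmap) !map_diag2 !diag2_mul.
  rewrite !rmorphV // ?unitrV // !rmorph1 !rmorph0 !invrK mulVf // divff //.
  under eq_bigr do rewrite expr1n.
  rewrite !sumr_const card_ord !mulr1 !mulr0 diag2_add addr0 add0r diag2_scale.
  rewrite rmorph_nat mulVf ?diag2_1 //.
rewrite -scalemxAr -scalemxAl; congr (_ *: _).
rewrite mulmxDr mulmxDl !mulmxA !Eop_eig // -!mulmxA !diag2_mul.
rewrite -!scalemxAl !scalemxAr !diag2_scale.
by rewrite !mulr1 !mul1r !mulr0 !mul0r.
Qed.



Lemma conj_lift (k : finFieldType) (R S : comUnitRingType) (piR : {rmorphism R -> k})
  (piS : {rmorphism S -> k}) (rho : 'M[R]_2 -> 'M[S]_2) (C : 'M[S]_2) :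
  is_lift piR piS rho -> C \in unitmx -> map_mx piS C = 1%:M ->
  is_lift piR piS (fun A => C *m rho A *m invmx C) /\
  strictly_equiv piS rho (fun A => C *m rho A *m invmx C).
Proof.
move=> [hmul [hunit [hred hcont]]] uC hC; split; last first.
  exists C; split; last by []. move=> i j; rewrite /maxid rmorphB.
  have h : (map_mx piS C) i j = (1%:M : 'M[k]_2) i j by rewrite hC.
  move: h; rewrite !mxE => ->.
  by rewrite rmorph_nat subrr.
split.
  move=> A B hA hB; rewrite hmul //.
  rewrite !mulmxA; congr (_ *m _); congr (_ *m _).
  by rewrite -[RHS]mulmxA mulVmx // mulmx1.
split.
  by move=> A hA; rewrite !unitmx_mul uC hunit // unitmx_inv uC.
split.
  have hiC : map_mx piS (invmx C) = 1%:M.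
    by rewrite -[LHS]mul1mx -hC -map_mxM mulmxV // map_mx1.
  by move=> A hA; rewrite !map_mxM hiC hC mul1mx mulmx1 hred.
move=> n; have [N hN] := hcont n; exists N => A hA hc.
by apply: congr_conj; [rewrite mulmxV | apply: hN].
Qed.

Lemma SL2_diag (T : comUnitRingType) (x y : T) : x * y = 1 -> SL2 (diag2 x y).
Proof. by rewrite /SL2 det_diag2. Qed.

Lemma conjX (T : comUnitRingType) (C P X : 'M[T]_2) j :
  P *m C = 1%:M -> (C *m X *m P) ^+ j = C *m X ^+ j *m P.
Proof.
move=> h; elim: j => [|j ih].
  by rewrite !expr0; rewrite mulmx1 (mulmx1C h).
rewrite !exprSr ih -!mulmxE !mulmxA; congr (_ *m _).
by rewrite -[C *m X ^+ j *m P *m C]mulmxA h mulmx1.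
Qed.

Lemma comm_diag (T : comUnitRingType) (N : 'M[T]_2) (c d : T) :
  d - c \is a GRing.unit -> N *m diag2 c d = diag2 c d *m N -> N 0 1 = 0 /\ N 1 0 = 0.
Proof.
move=> u h; split.
  have h1 : (N *m diag2 c d) 0 1 = (diag2 c d *m N) 0 1 by rewrite h.
  move: h1; rewrite !mulmx2E !mxE /= !mulr0 !mul0r add0r addr0 => h1.
  have h2 : N 0 1 * (d - c) = 0 by rewrite mulrBr h1 mulrC subrr.
  by rewrite -(mulrK u (N 0 1)) h2 mul0r.
have h1 : (N *m diag2 c d) 1 0 = (diag2 c d *m N) 1 0 by rewrite h.
move: h1; rewrite !mulmx2E !mxE /= !mulr0 !mul0r add0r addr0 => h1.
have h2 : N 1 0 * (d - c) = 0 by rewrite mulrBr h1 mulrC subrr.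
by rewrite -(mulrK u (N 1 0)) h2 mul0r.
Qed.


Unset Implicit Arguments. Set Strict Implicit.

Theorem mainTheorem18 (k : finFieldType)
  (R : comUnitRingType) (piR : {rmorphism R -> k})
  (S : comUnitRingType) (piS : {rmorphism S -> k}) :
  in_hatC piR -> in_hatC piS ->
  forall rho : 'M[R]_2 -> 'M[S]_2, is_lift piR piS rho ->
  exists rho' : 'M[R]_2 -> 'M[S]_2,
    is_lift piR piS rho' /\ strictly_equiv piS rho rho' /\
    (forall (a : R) (b : S), mu #|k| a -> mu #|k| b -> piS b = piR a ->
       rho' (diag2 a a^-1) = diag2 b b^-1).
Proof.
move=> [locR _] [locS _] rho hl.
have hl' := hl; move: hl' => [hmul [hunit [hred hcont]]].
rewrite /mu; set n := #|k|.-1.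
have nk : (n%:R : k) != 0 by exact: nk0.
have n0 : (0 < n)%N by move: nk; rewrite /n; case: (#|k|.-1) => //; rewrite eqxx.
have tSL : forall a : R, a ^+ n = 1 -> SL2 (diag2 a a^-1).
  move=> a ha; apply: SL2_diag; rewrite mulrV //; exact: mu_unit n0 ha.
have SL1 : SL2 (1%:M : 'M[R]_2) by rewrite /SL2 det1.
have rho1 : rho 1%:M = 1%:M.
  have h := hmul _ _ SL1 SL1; rewrite mulmx1 in h.
  have u := hunit _ SL1.
  by rewrite -[LHS]mulmx1 -(mulmxV u) mulmxA -h.
have rhoN : forall a : R, a ^+ n = 1 -> rho (diag2 a a^-1) ^+ n = 1.
  move=> a ha; have ua : a \is a GRing.unit := mu_unit n0 ha.
  suff : forall j, rho (diag2 a a^-1) ^+ j = rho (diag2 (a ^+ j) (a^-1 ^+ j)).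
    by move=> ->; rewrite exprVn ha invr1 diag2_1 rho1.
  elim => [|j ih]; first by rewrite !expr0 diag2_1 rho1.
  rewrite exprSr ih -mulmxE -hmul; first by rewrite diag2_mul -!exprSr.
    by apply: SL2_diag; rewrite -exprMn mulrV // expr1n.
  exact: tSL.
have redt : forall a : R, a ^+ n = 1 ->
    map_mx piS (rho (diag2 a a^-1)) = diag2 (piR a) (piR a)^-1.
  move=> a ha; rewrite hred; last exact: tSL.
  by rewrite map_diag2 rmorphV //; exact: mu_unit n0 ha.
case: (classic (exists (a0 : R) (b0 : S), a0 ^+ n = 1 /\ b0 ^+ n = 1 /\
          piS b0 = piR a0 /\ piS b0 != piS b0^-1)).
- move=> [a0 [b0 [ma0 [mb0 [hab0 hne]]]]].
  set M0 := rho (diag2 a0 a0^-1).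
  have [P0 [hP0m hP0]] : exists P : 'M[S]_2, map_mx piS P = 1%:M /\ M0 *m P = P *m diag2 b0 b0^-1.
    apply: (@eigen k S piS n) => //; [exact: rhoN | by rewrite redt // hab0].
  have uP0 : P0 \in unitmx := unit_of_map1 locS hP0m.
  set C := invmx P0.
  have uC : C \in unitmx by rewrite unitmx_inv.
  have hCm : map_mx piS C = 1%:M.
    by rewrite -[LHS]mulmx1 -hP0m -map_mxM mulVmx // map_mx1.
  have [hl2 hse] := conj_lift hl uC hCm.
  exists (fun A => C *m rho A *m invmx C); split => //; split => //.
  move=> a b ma mb hab; rewrite /= invmxK.
  set Mt := rho (diag2 a a^-1).
  have hcomm : Mt *m M0 = M0 *m Mt.
    rewrite /Mt /M0 -!hmul; try exact: tSL. by rewrite !diag2_mul [a * a0]mulrC [a^-1 / a0]mulrC.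
  have hD0 : C *m M0 *m P0 = diag2 b0 b0^-1 by rewrite -mulmxA hP0 mulmxA mulVmx // mul1mx.
  have hPC : P0 *m C = 1%:M by rewrite mulmxV.
  set N := C *m Mt *m P0.
  have e1 : forall X Y, (C *m X *m P0) *m (C *m Y *m P0) = C *m (X *m Y) *m P0.
    move=> X Y; rewrite !mulmxA; congr (_ *m _).
    by rewrite -[C *m X *m P0 *m C]mulmxA hPC mulmx1.
  have hND : N *m diag2 b0 b0^-1 = diag2 b0 b0^-1 *m N by rewrite -hD0 /N !e1 hcomm.
  have ub0 : b0^-1 - b0 \is a GRing.unit.
    apply: locS.2; rewrite rmorphB subr_eq0 eq_sym; exact: hne.
  have [N01 N10] := comm_diag ub0 hND.
  have NX : N ^+ n = 1 by rewrite /N conjX // rhoN // mulmx1 mulVmx.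
  have Nm : map_mx piS N = diag2 (piR a) (piR a)^-1.
    by rewrite /N !map_mxM hCm hP0m mul1mx mulmx1 redt.
  clearbody N.
  have NE : N = diag2 (N 0 0) (N 1 1) by apply: mx2P; rewrite !mxE /= ?N01 ?N10.
  have xn : N 0 0 ^+ n = 1 /\ N 1 1 ^+ n = 1.
    move: NX; rewrite NE diag2_exp => h; split.
      have h1 : (diag2 (N 0 0 ^+ n) (N 1 1 ^+ n)) 0 0 = (1%:M : 'M[S]_2) 0 0 by rewrite h.
      by move: h1; rewrite !mxE.
    have h1 : (diag2 (N 0 0 ^+ n) (N 1 1 ^+ n)) 1 1 = (1%:M : 'M[S]_2) 1 1 by rewrite h.
    by move: h1; rewrite !mxE.
  have ub : b \is a GRing.unit := mu_unit n0 mb.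
  have px : piS (N 0 0) = piS b.
    have h : (map_mx piS N) 0 0 = (diag2 (piR a) (piR a)^-1) 0 0 by rewrite Nm.
    by move: h; rewrite !mxE /= hab.
  have py : piS (N 1 1) = piS b^-1.
    have h : (map_mx piS N) 1 1 = (diag2 (piR a) (piR a)^-1) 1 1 by rewrite Nm.
    by move: h; rewrite !mxE /= rmorphV // hab.
  have hbi : b^-1 ^+ n = 1 by rewrite exprVn mb invr1.
  by rewrite NE (uniq_mu locS nk xn.1 mb px) (uniq_mu locS nk xn.2 hbi py).
- move=> hno.
  have u1 : (1%:M : 'M[S]_2) \in unitmx := unitmx1 _ _.
  have [hl2 hse] := conj_lift hl u1 (map_mx1 _ _).
  exists (fun A => 1%:M *m rho A *m invmx 1%:M); split => //; split => //.
  move=> a b ma mb hab; rewrite /= invmx1 mul1mx mulmx1.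
  set Mt := rho (diag2 a a^-1).
  have [P [hPm hP]] : exists P : 'M[S]_2, map_mx piS P = 1%:M /\ Mt *m P = P *m diag2 b b^-1.
    apply: (@eigen k S piS n) => //; [exact: rhoN | by rewrite redt // hab].
  have hb : piS b = piS b^-1.
    apply: NNPP => h; apply: hno; exists a, b; do 3! split => //; exact/eqP.
  have hbi : b^-1 ^+ n = 1 by rewrite exprVn mb invr1.
  have bb : b^-1 = b := uniq_mu locS nk hbi mb (esym hb).
  have uP : P \in unitmx := unit_of_map1 locS hPm.
  rewrite bb in hP *.
  have D : diag2 b b = b%:M by apply: mx2P; rewrite !mxE.
  rewrite D scalar_mxC in hP; rewrite D.
  have := congr1 (mulmx ^~ (invmx P)) hP => /=.
  by rewrite -!mulmxA mulmxV // !mulmx1.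
Qed.
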